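(* Let $a,b$ be positive integers and $c$ an integer with $-b<c<a$, and suppose that $E_{(-b,c,a)}^{(\infty,\infty,\infty)}=\bigoplus_{r\in\mathbb{Z}}A_r$ is of full support. Then for every even integer $r$, the component $A_r$ contains infinitely many monomials of even length with pairwise disjoint supports.
   Context: $E$ is the Grassmann algebra of an infinite-dimensional vector space with basis $e_1,e_2,\dots$; monomials are $1$ and $e_{i_1}\cdots e_{i_k}$ with $i_1<\dots<i_k$, of length $k$ and support $\{e_{i_1},\dots,e_{i_k}\}$. For pairwise distinct integers $r_1,r_2,r_3$, $E_{(r_1,r_2,r_3)}^{(\infty,\infty,\infty)}=\bigoplus_rA_r$ is the $\mathbb{Z}$-grading obtained by splitting $\{e_i\}$ into three disjoint infinite sets, giving elements of the $j$-th set degree $r_j$ and monomials the sum of the degrees of their factors. Full support means $A_r\ne0$ for every $r\in\mathbb{Z}$. *)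

(* Defs.v *)
From HB Require Import structures.
From mathcomp Require Import all_boot all_order all_algebra.
From mathcomp Require Import finmap.
Set Implicit Arguments. Unset Strict Implicit. Unset Printing Implicit Defensive.
Import Order.TTheory GRing.Theory Num.Theory.
Local Open Scope ring_scope.
Local Open Scope fset_scope.

(* Generators of the Grassmann algebra E are e_0, e_1, e_2, ... (indexed by nat).
   A monomial e_{i_1}...e_{i_k} (i_1 < ... < i_k) is determined by its support,
   the finite set {i_1,...,i_k}; the empty support is the monomial 1. *)
Definition monomial := {fset nat}.

Definition mlength (m : monomial) : nat := #|` m|.

(* A splitting of the generators into three pairwise disjoint infinite sets:
   p i = j means e_i lies in the j-th set.  Each set must be infinite. *)
Definition three_infinite_split (p : nat -> 'I_3) : Prop :=
  forall (j : 'I_3) (N : nat), exists i : nat, (N <= i)%N /\ p i = j.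

Definition gen_deg (r1 r2 r3 : int) (p : nat -> 'I_3) (i : nat) : int :=
  match val (p i) with 0%N => r1 | 1%N => r2 | _ => r3 end.

Definition mdeg (r1 r2 r3 : int) (p : nat -> 'I_3) (m : monomial) : int :=
  \sum_(i <- m) gen_deg r1 r2 r3 p i.

(* A_r is spanned by the monomials of degree r; a monomial lies in A_r iff
   its degree is r. *)
Definition in_component (r1 r2 r3 : int) (p : nat -> 'I_3) (r : int)
  (m : monomial) : Prop := mdeg r1 r2 r3 p m = r.

(* Full support: A_r <> 0 for every r, i.e. every A_r contains a monomial
   (A_r is the span of the monomials of degree r). *)
Definition full_support (r1 r2 r3 : int) (p : nat -> 'I_3) : Prop :=
  forall r : int, exists m : monomial, in_component r1 r2 r3 p r m.

(* Main.v *)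
Require Import Defs.
From HB Require Import structures.
From mathcomp Require Import all_boot all_order all_algebra.
From mathcomp Require Import finmap.
Import Order.TTheory GRing.Theory Num.Theory.
Local Open Scope ring_scope.
Local Open Scope fset_scope.

Definition cd (r1 r2 r3 : int) (j : 'I_3) : int :=
  match val j with 0%N => r1 | 1%N => r2 | _ => r3 end.

Fixpoint genL (f : 'I_3 -> nat -> nat) (l : seq 'I_3) (N : nat) : {fset nat} :=
  match l with
  | [::] => fset0
  | j :: l' => f j N |` genL f l' (f j N).+1
  end.

Lemma genL_ge f (p : nat -> 'I_3) (hf : forall j N, (N <= f j N)%N /\ p (f j N) = j)
  l : forall N i, i \in genL f l N -> (N <= i)%N.
Proof.
elim: l => [|j l IH] N i /=; first by rewrite in_fset0.
rewrite !inE => /orP [/eqP -> | /IH]; first by case: (hf j N).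
case: (hf j N) => h _ h2; apply: leq_trans h _; exact: ltnW.
Qed.

Arguments genL_ge {f p} hf l {N i}.

Lemma genL_card f (p : nat -> 'I_3) (hf : forall j N, (N <= f j N)%N /\ p (f j N) = j)
  l : forall N, #|` genL f l N| = size l.
Proof.
elim: l => [|j l IH] N /=; first by [].
rewrite cardfsU1 IH.
have -> : f j N \notin genL f l (f j N).+1.
  by apply/negP => /(genL_ge hf _); rewrite ltnn.
by [].
Qed.

Arguments genL_card {f p} hf l N.

Lemma genL_sum f (p : nat -> 'I_3) (hf : forall j N, (N <= f j N)%N /\ p (f j N) = j)
  (F : 'I_3 -> int) l : forall N, \sum_(i <- genL f l N) F (p i) = \sum_(j <- l) F j.
Proof.
elim: l => [|j l IH] N /=; first by rewrite !big_nil.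
rewrite big_fsetU1 /=; last by apply/negP => /(genL_ge hf _); rewrite ltnn.
by rewrite IH big_cons; case: (hf j N) => _ ->.
Qed.

Arguments genL_sum {f p} hf F l N.

Lemma sum_nseq (F : 'I_3 -> int) n x : \sum_(j <- nseq n x) F j = F x *+ n.
Proof. by elim: n => [|n IH]; rewrite ?big_nil // big_cons IH mulrS. Qed.

Fixpoint Nk (f : 'I_3 -> nat -> nat) (l : seq 'I_3) (k : nat) : nat :=
  match k with
  | 0%N => 0%N
  | k'.+1 => (Nk f l k' + (\max_(i <- genL f l (Nk f l k')) i).+1)%N
  end.

Lemma Nk_mono f l k k' : (k <= k')%N -> (Nk f l k <= Nk f l k')%N.
Proof.
elim: k' => [|k' IH]; first by rewrite leqn0 => /eqP ->.
rewrite leq_eqVlt => /orP [/eqP -> // | /IH h].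
apply: leq_trans h _; exact: leq_addr.
Qed.

Theorem lemma4p7 (a b : nat) (c : int) (p : nat -> 'I_3) :
  (0 < a)%N -> (0 < b)%N ->
  - (b%:Z) < c -> c < a%:Z ->
  three_infinite_split p ->
  full_support (- (b%:Z)) c (a%:Z) p ->
  forall r : int, ~~ odd `|r|%N ->
  exists m : nat -> monomial,
    injective m /\
    (forall k, in_component (- (b%:Z)) c (a%:Z) p r (m k) /\ ~~ odd (mlength (m k))) /\
    (forall k l, k <> l -> m k `&` m l = fset0).
Proof.
move=> a0 b0 _ _ H FS r er.
have ex : forall (j : 'I_3) N, exists i, (N <= i)%N && (p i == j).
  move=> j N; case: (H j N) => i [h1 h2]; exists i; by rewrite h1 h2 eqxx.
pose f := fun j N => ex_minn (ex j N).
have hf : forall j N, (N <= f j N)%N /\ p (f j N) = j.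
  move=> j N; rewrite /f; case: ex_minnP => i /andP [h1 /eqP h2] _; by [].
have d2 : (2 %| r)%Z by rewrite dvdzE dvdn2.
set r' := (r %/ 2)%Z.
have hr : r' * 2 = r by apply: divzK.
case: (FS r') => m0 hm0.
set s2 := [seq p i | i <- enum_fset m0] ++ nseq a (0 : 'I_3) ++ nseq b (2 : 'I_3).
set l := s2 ++ s2.
pose m := fun k => genL f l (Nk f l k).
have Hsum : forall k, mdeg (- (b%:Z)) c (a%:Z) p (m k) = r.
  move=> k; rewrite /mdeg.
  have -> : \sum_(i <- m k) gen_deg (- b%:Z) c a%:Z p i
      = \sum_(i <- m k) cd (- b%:Z) c a%:Z (p i) by [].
  rewrite (genL_sum hf) /l big_cat /= /s2 !big_cat /= big_map sum_nseq sum_nseq.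
  have -> : \sum_(i <- enum_fset m0) cd (- b%:Z) c a%:Z (p i) = r' by exact: hm0.
  rewrite /cd /= -hr.
  have -> : ((- b%:Z) *+ a + a%:Z *+ b = 0)%R.
    by rewrite mulNrn -!natz -!mulrnA mulnC addNr.
  by rewrite !addr0 mulrDr mulr1.
have Hcard : forall k, #|` m k| = (size s2 + size s2)%N.
  by move=> k; rewrite /m (genL_card hf) size_cat.
have Hpos : (0 < size s2)%N by rewrite /s2 !size_cat size_nseq; rewrite addnCA; apply: ltn_addr.
have Hdisj : forall k k', (k < k')%N -> m k `&` m k' = fset0.
  move=> k k' hk; apply/fsetP => i; rewrite !inE.
  apply/negbTE/negP => /andP [h1 h2].
  have e1 : (i <= \max_(j <- m k) j)%N := @leq_bigmax_seq _ _ xpredT (fun j => j) i h1 erefl.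
  have e2 := genL_ge hf _ h2.
  have e3 : (Nk f l k.+1 <= Nk f l k')%N by apply: Nk_mono.
  have : (i < Nk f l k.+1)%N.
    rewrite /= addnS ltnS; exact: leq_trans e1 (leq_addl _ _).
  move=> h; have := leq_trans h (leq_trans e3 e2); by rewrite ltnn.
exists m; split; last split.
- move=> k k' e; apply/eqP; apply/negP => ne.
  have : m k `&` m k' = fset0.
    case: (ltngtP k k') ne => // hk _; first exact: Hdisj.
    by rewrite fsetIC; apply: Hdisj.
  rewrite e fsetIid => e0.
  have := Hcard k'; rewrite e0 cardfs0 => e4.
  by move: Hpos e4; case: (size s2).
- move=> k; split; first exact: Hsum.
  by rewrite /mlength Hcard addnn odd_double.
- move=> k k' ne; case: (ltngtP k k') => hk; first exact: Hdisj.
  + by rewrite fsetIC; apply: Hdisj.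
  + by rewrite hk in ne.
Qed.
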